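(* There exist positive constants $\varepsilon_1,\varepsilon_2,\varepsilon_3$ with the following property. For every $t\le 0$ (so that $p_2(t)\le p_1(t)\le 0$), every $i,j\in\mathbb Z$ and every $z\in\mathbb R$, write $\Phi=(\phi_{i,j;1}(z-p_1(t)),\phi_{i,j;2}(z+p_1(t)),\phi_{i,j;3}(z+p_2(t)))$. Then: - $Q_y(\Phi)\ge\varepsilon_1$ whenever $z\le -p_1(t)$; - $Q_z(\Phi)\ge\varepsilon_2$ whenever $p_1(t)\le z\le -p_2(t)$; - $Q_w(\Phi)\ge\varepsilon_3$ whenever $z\ge -p_1(t)$.
   Context: Setting: $0<a<1$, and $J$, $f_{i,j}$ satisfy the following. - $J:\mathbb Z^2\to[0,\infty)$ is even, $\sum J=1$, and $J$ is finitely supported. - $f_{i,j}\in C^2$ is bistable: $f_{i,j}(0)=f_{i,j}(a)=f_{i,j}(1)=0$, $f'_{i,j}(0),f'_{i,j}(1)<0<f'_{i,j}(a)$, $f_{i,j}<0$ on $(0,a)$ and $f_{i,j}>0$ on $(a,1)$. - $f_{i,j}$ is periodic with periods $N_1$ in $i$ and $N_2$ in $j$. - For all $i,j$: $f_{i,j}(u)\ge f_{i,j}'(a)(u-a)$ on $[0,a]$ and $f_{i,j}(u)\le f_{i,j}'(a)(u-a)$ on $[a,1]$. Fix $\theta$. For $k=1,2,3$, let $\phi_{i,j;k}$ (periodic in $i,j$ with periods $N_1,N_2$) be monotone pulsating traveling front profiles with speeds $c_k$. They solve $$c_k\phi_{i,j;k}'(\xi)=\sum_{k_1,k_2}J(k_1,k_2)\phi_{i-k_1,j-k_2;k}(\xi-k_1\cos\theta-k_2\sin\theta)-\phi_{i,j;k}(\xi)+f_{i,j}(\phi_{i,j;k}(\xi)),$$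 with the following limits and normalizations: - $\phi_{i,j;1}(-\infty)=1$, $\phi_{i,j;1}(+\infty)=0$, $\phi_{i,j;1}(0)=a/2$; - $\phi_{i,j;2}(-\infty)=0$, $\phi_{i,j;2}(+\infty)=a$, $\phi_{i,j;2}(0)=a/2$; - $\phi_{i,j;3}(-\infty)=a$, $\phi_{i,j;3}(+\infty)=1$, $\phi_{i,j;3}(0)=(1+a)/2$. The speeds satisfy $c_1<c_2<c_3$. Define $Q$ on $D_1=([0,1]\times[0,a]\times[a,1])\setminus(\{(1,a,w)\}\cup\{(1,z,1)\}\cup\{(y,0,1)\})$ by $$Q(y,z,w)=z+(1-z)\frac{(1-y)z(w-a)+y(a-z)(1-w)}{(1-y)z(1-a)+(a-z)(1-w)}.$$ Let $s_1=(c_2-c_1)/2$, $\bar c=(c_1+c_2)/2$ and $s_2=c_3-\bar c$. For positive constants $\kappa,L,p_0$ define, for $t\le0$, $$p_1(t)=s_1t-\tfrac1\kappa\ln\big[e^{-\kappa p_0}+\tfrac{L(1-e^{\kappa s_1t})}{s_1}\big],\qquad p_2(t)=s_2t-\tfrac1\kappa\ln\big[e^{-\kappa p_0}+\tfrac{L(1-e^{\kappa s_1t})}{s_1}\big].$$ These are the solutions of $p_1'=s_1+Le^{\kappa p_1}$ and $p_2'=s_2+Le^{\kappa p_1}$ with $p_1(0)=p_2(0)=p_0$. Here $p_0$ is chosen so that $p_1,p_2\le 0$ for $t\le 0$. $Q_y,Q_z,Q_w$ denote the partial derivatives of $Q$. *)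

(* Defs.v *)
From Stdlib Require Import Reals Lra List ZArith.
Open Scope R_scope.

Definition sumZ2 (S : list (Z * Z)) (g : Z * Z -> R) : R :=
  fold_right (fun k acc => g k + acc) 0 S.

Definition kernel_hyp (J : Z -> Z -> R) (S : list (Z * Z)) : Prop :=
  NoDup S /\
  (forall k1 k2, 0 <= J k1 k2) /\
  (forall k1 k2, J (- k1)%Z (- k2)%Z = J k1 k2) /\
  (forall k1 k2, ~ In (k1, k2) S -> J k1 k2 = 0) /\
  sumZ2 S (fun k => J (fst k) (snd k)) = 1.

Definition nonlin_hyp (a : R) (N1 N2 : Z) (f f1 f2 : Z -> Z -> R -> R) : Prop :=
  (forall i j u, derivable_pt_lim (f i j) u (f1 i j u)) /\
  (forall i j u, derivable_pt_lim (f1 i j) u (f2 i j u)) /\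
  (forall i j, continuity (f2 i j)) /\
  (forall i j, f i j 0 = 0 /\ f i j a = 0 /\ f i j 1 = 0) /\
  (forall i j, f1 i j 0 < 0 /\ f1 i j 1 < 0 /\ 0 < f1 i j a) /\
  (forall i j u, 0 < u < a -> f i j u < 0) /\
  (forall i j u, a < u < 1 -> f i j u > 0) /\
  (forall i j, f (i + N1)%Z j = f i j /\ f i (j + N2)%Z = f i j) /\
  (forall i j u, 0 <= u <= a -> f i j u >= f1 i j a * (u - a)) /\
  (forall i j u, a <= u <= 1 -> f i j u <= f1 i j a * (u - a)).

Definition lim_pinf (g : R -> R) (l : R) : Prop :=
  forall eps, 0 < eps -> exists M, forall x, M <= x -> Rabs (g x - l) < eps.
Definition lim_minf (g : R -> R) (l : R) : Prop :=
  forall eps, 0 < eps -> exists M, forall x, x <= M -> Rabs (g x - l) < eps.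

Definition nonincreasing (g : R -> R) : Prop := forall x y, x <= y -> g y <= g x.
Definition nondecreasing (g : R -> R) : Prop := forall x y, x <= y -> g x <= g y.

Definition front_eq (J : Z -> Z -> R) (S : list (Z * Z)) (f : Z -> Z -> R -> R)
  (N1 N2 : Z) (theta c : R) (phi : Z -> Z -> R -> R) : Prop :=
  (forall i j, phi (i + N1)%Z j = phi i j /\ phi i (j + N2)%Z = phi i j) /\
  exists dphi : Z -> Z -> R -> R,
    forall i j xi,
      derivable_pt_lim (phi i j) xi (dphi i j xi) /\
      c * dphi i j xi =
        sumZ2 S (fun k => J (fst k) (snd k) *
                  phi (i - fst k)%Z (j - snd k)%Z
                      (xi - IZR (fst k) * cos theta - IZR (snd k) * sin theta))
        - phi i j xi + f i j (phi i j xi).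

Definition Q (a y z w : R) : R :=
  z + (1 - z) * (((1 - y) * z * (w - a) + y * (a - z) * (1 - w)) /
                 ((1 - y) * z * (1 - a) + (a - z) * (1 - w))).

Definition pfun (kappa L p0 s1 s : R) (t : R) : R :=
  s * t - / kappa * ln (exp (- kappa * p0) + L * (1 - exp (kappa * s1 * t)) / s1).

(* Main.v *)
Require Import Defs.
From Stdlib Require Import Reals ZArith List Lra.
From Coquelicot Require Import Coquelicot.
Open Scope R_scope.

Definition Dn (a y z w : R) := (1 - y) * z * (1 - a) + (a - z) * (1 - w).

Lemma Qy_d a y z w : Dn a y z w <> 0 ->
  derivable_pt_lim (fun y => Q a y z w) y
   (a*(1-z)*((1-w)*(1-w))*(a-z)/(Dn a y z w ^2)).
Proof. unfold Dn. intro H. apply is_derive_Reals. unfold Q. auto_derive. exact H.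
field. exact H. Qed.

Lemma Qz_d a y z w : Dn a y z w <> 0 ->
  derivable_pt_lim (fun z => Q a y z w) z
   (a*(1-y)*(1-w)*(1-a)*(w-y)/(Dn a y z w ^2)).
Proof. unfold Dn. intro H. apply is_derive_Reals. unfold Q. auto_derive. exact H.
field. exact H. Qed.

Lemma Qw_d a y z w : Dn a y z w <> 0 ->
  derivable_pt_lim (fun w => Q a y z w) w
   (a*(1-z)*((1-y)*(1-y))*z*(1-a)/(Dn a y z w ^2)).
Proof. unfold Dn. intro H. apply is_derive_Reals. unfold Q. auto_derive. exact H.
field. exact H. Qed.

Lemma div_ge (n D e : R) : 0 <= e <= n -> 0 < D <= 1 -> e <= n / D ^ 2.
Proof. intros [He Hn] [HD HD1].
  assert (0 < D^2) by (apply pow_lt; lra).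
  assert (D^2 <= 1) by nra.
  apply Rle_trans with n; [lra|].
  apply Rmult_le_reg_r with (D^2); [lra|].
  unfold Rdiv. rewrite Rmult_assoc, Rinv_l by lra. nra.
Qed.

Lemma ni_le g l : nonincreasing g -> lim_minf g l -> forall x, g x <= l.
Proof. intros Hm Hl x. destruct (Rle_or_lt (g x) l) as [h|h]; [exact h|].
  destruct (Hl (g x - l)) as [M HM]; [lra|].
  specialize (HM (Rmin M x) (Rmin_l _ _)). specialize (Hm _ _ (Rmin_r M x)).
  apply Rabs_lt_between' in HM. lra. Qed.
Lemma ni_ge g l : nonincreasing g -> lim_pinf g l -> forall x, l <= g x.
Proof. intros Hm Hl x. destruct (Rle_or_lt l (g x)) as [h|h]; [exact h|].
  destruct (Hl (l - g x)) as [M HM]; [lra|].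
  specialize (HM (Rmax M x) (Rmax_l _ _)). specialize (Hm _ _ (Rmax_r M x)).
  apply Rabs_lt_between' in HM. lra. Qed.
Lemma nd_ge g l : nondecreasing g -> lim_minf g l -> forall x, l <= g x.
Proof. intros Hm Hl x. destruct (Rle_or_lt l (g x)) as [h|h]; [exact h|].
  destruct (Hl (l - g x)) as [M HM]; [lra|].
  specialize (HM (Rmin M x) (Rmin_l _ _)). specialize (Hm _ _ (Rmin_r M x)).
  apply Rabs_lt_between' in HM. lra. Qed.
Lemma nd_le g l : nondecreasing g -> lim_pinf g l -> forall x, g x <= l.
Proof. intros Hm Hl x. destruct (Rle_or_lt (g x) l) as [h|h]; [exact h|].
  destruct (Hl (g x - l)) as [M HM]; [lra|].
  specialize (HM (Rmax M x) (Rmax_l _ _)). specialize (Hm _ _ (Rmax_r M x)).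
  apply Rabs_lt_between' in HM. lra. Qed.

Lemma m2 a b c d : 0 <= a <= b -> 0 <= c <= d -> 0 <= a * c <= b * d.
Proof. intros. split. nra. apply Rmult_le_compat; lra. Qed.

Ltac prodb := first [lra | apply m2; prodb].

Lemma Dle a y z w : 0 <= y <= 1 -> 0 <= z <= a -> a <= w <= 1 -> a < 1 ->
  Dn a y z w <= 1.
Proof. intros. unfold Dn.
  assert (0 <= (1-y)*(1-a) <= 1) by (split; nra).
  assert ((1 - y) * z * (1 - a) <= z * 1).
  { replace ((1 - y) * z * (1 - a)) with (z * ((1-y)*(1-a))) by ring.
    apply Rmult_le_compat_l; lra. }
  assert ((a - z) * (1 - w) <= (a - z) * 1) by (apply Rmult_le_compat_l; lra).
  lra. Qed.

Theorem lemma2p3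
  (a : R) (J : Z -> Z -> R) (S : list (Z * Z)) (N1 N2 : Z)
  (f f1 f2 : Z -> Z -> R -> R) (theta c1 c2 c3 : R)
  (phi1 phi2 phi3 : Z -> Z -> R -> R) (kappa L p0 : R) :
  0 < a < 1 ->
  kernel_hyp J S ->
  (0 < N1)%Z -> (0 < N2)%Z ->
  nonlin_hyp a N1 N2 f f1 f2 ->
  front_eq J S f N1 N2 theta c1 phi1 ->
  front_eq J S f N1 N2 theta c2 phi2 ->
  front_eq J S f N1 N2 theta c3 phi3 ->
  (forall i j, nonincreasing (phi1 i j) /\ lim_minf (phi1 i j) 1 /\
               lim_pinf (phi1 i j) 0 /\ phi1 i j 0 = a / 2) ->
  (forall i j, nondecreasing (phi2 i j) /\ lim_minf (phi2 i j) 0 /\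
               lim_pinf (phi2 i j) a /\ phi2 i j 0 = a / 2) ->
  (forall i j, nondecreasing (phi3 i j) /\ lim_minf (phi3 i j) a /\
               lim_pinf (phi3 i j) 1 /\ phi3 i j 0 = (1 + a) / 2) ->
  c1 < c2 < c3 ->
  0 < kappa -> 0 < L ->
  let s1 := (c2 - c1) / 2 in
  let cbar := (c1 + c2) / 2 in
  let s2 := c3 - cbar in
  let p1 := pfun kappa L p0 s1 s1 in
  let p2 := pfun kappa L p0 s1 s2 in
  (forall t, t <= 0 -> p1 t <= 0 /\ p2 t <= 0) ->
  exists eps1 eps2 eps3 : R, 0 < eps1 /\ 0 < eps2 /\ 0 < eps3 /\
    forall (t : R) (i j : Z) (z : R), t <= 0 ->
      let Y := phi1 i j (z - p1 t) in
      let Z' := phi2 i j (z + p1 t) in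
      let W := phi3 i j (z + p2 t) in
      (z <= - p1 t ->
         exists d, derivable_pt_lim (fun y => Q a y Z' W) Y d /\ eps1 <= d) /\
      (p1 t <= z <= - p2 t ->
         exists d, derivable_pt_lim (fun zz => Q a Y zz W) Z' d /\ eps2 <= d) /\
      (- p1 t <= z ->
         exists d, derivable_pt_lim (fun w => Q a Y Z' w) W d /\ eps3 <= d).
Proof.
  intros Ha _ _ _ _ _ _ _ H1 H2 H3 Hc _ _ s1 cbar s2 p1 p2 Hp.
  exists (a*(1-a)*(((1-a)/2)*((1-a)/2))*(a/2)),
         (a*(1/2)*((1-a)/2)*(1-a)*(a/2)),
         (a*(1-a)*((1/2)*(1/2))*(a/2)*(1-a)).
  assert (0 < 1 - a) by lra.
  split; [repeat apply Rmult_lt_0_compat; lra|].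
  split; [repeat apply Rmult_lt_0_compat; lra|].
  split; [repeat apply Rmult_lt_0_compat; lra|].
  intros t i j z Ht Y Z' W.
  destruct (Hp t Ht) as [Hp1 Hp2].
  assert (Hp12 : p2 t <= p1 t).
  { unfold p1, p2, pfun.
    assert ((s2 - s1) * t <= 0).
    { assert (0 <= s2 - s1) by (unfold s2, s1, cbar; lra). nra. }
    assert (s2 * t <= s1 * t) by (replace (s2*t) with ((s2-s1)*t + s1*t) by ring; lra).
    lra. }
  destruct (H1 i j) as [m1 [l1 [r1 e1]]].
  destruct (H2 i j) as [m2' [l2 [r2 e2]]].
  destruct (H3 i j) as [m3 [l3 [r3 e3]]].
  assert (Y1 : Y <= 1) by apply (ni_le _ _ m1 l1).
  assert (Y0 : 0 <= Y) by apply (ni_ge _ _ m1 r1).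
  assert (Z0 : 0 <= Z') by apply (nd_ge _ _ m2' l2).
  assert (Za : Z' <= a) by apply (nd_le _ _ m2' r2).
  assert (Wa : a <= W) by apply (nd_ge _ _ m3 l3).
  assert (W1 : W <= 1) by apply (nd_le _ _ m3 r3).
  split; [|split].
  - intro Hz.
    assert (HZ : Z' <= a/2) by (rewrite <- e2; apply m2'; lra).
    assert (HW : W <= (1+a)/2) by (rewrite <- e3; apply m3; lra).
    assert (HD : 0 < Dn a Y Z' W <= 1).
    { unfold Dn. split.
      - assert (0 <= (1 - Y) * Z' * (1 - a)) by (apply Rmult_le_pos; [apply Rmult_le_pos|]; lra).
        assert (0 < (a - Z') * (1 - W)) by (apply Rmult_lt_0_compat; lra). lra.
      - apply Dle; lra. }
    eexists; split; [apply Qy_d; lra|].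
    apply div_ge; [|exact HD].
    prodb.
  - intros Hz.
    assert (HY : Y <= a/2) by (rewrite <- e1; apply m1; lra).
    assert (HW : W <= (1+a)/2) by (rewrite <- e3; apply m3; lra).
    assert (HD : 0 < Dn a Y Z' W <= 1).
    { unfold Dn. split.
      - assert (A1 : (1-a)/2 <= (1-Y)*(1-a)) by nra.
        assert (A2 : Z' * ((1-a)/2) <= (1 - Y) * Z' * (1 - a)).
        { replace ((1 - Y) * Z' * (1 - a)) with (Z' * ((1-Y)*(1-a))) by ring.
          apply Rmult_le_compat_l; lra. }
        assert ((a - Z') * ((1-a)/2) <= (a - Z') * (1 - W)) by (apply Rmult_le_compat_l; lra).
        nra.
      - apply Dle; lra. }
    eexists; split; [apply Qz_d; lra|].
    apply div_ge; [|exact HD].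
    prodb.
  - intros Hz.
    assert (HY : Y <= a/2) by (rewrite <- e1; apply m1; lra).
    assert (HZ : a/2 <= Z') by (rewrite <- e2; apply m2'; lra).
    assert (HD : 0 < Dn a Y Z' W <= 1).
    { unfold Dn. split.
      - assert (0 < (1 - Y) * Z' * (1 - a)) by (apply Rmult_lt_0_compat; [apply Rmult_lt_0_compat|]; lra).
        assert (0 <= (a - Z') * (1 - W)) by (apply Rmult_le_pos; lra). lra.
      - apply Dle; lra. }
    eexists; split; [apply Qw_d; lra|].
    apply div_ge; [|exact HD].
    prodb.
Qed.
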